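(* Let $F$ be a real closed field and $F(y)$ the rational function field in one variable. Then for every $\zeta\in M(F(y))$, the preimage $\lambda^{-1}(\zeta)$ consists of at most two orderings of $F(y)$.
   Context: $M(K)$ denotes the set of $\mathbb R$-places $K\to\mathbb R\cup\{\infty\}$ of a field $K$. For an ordering $P$ of $K$, $\lambda(P)\in M(K)$ is the $\mathbb R$-place associated with $P$: the unique $\mathbb R$-place compatible with $P$ (sending non-negative elements to non-negative reals or $\infty$), namely the place of the convex hull of $\mathbb Q$ in $(K,P)$ composed with the order embedding of its residue field into $\mathbb R$. Here $\lambda$ is the map from the set of orderings of $F(y)$ to $M(F(y))$. *)

(* Defs.v *)
From HB Require Import structures.
From mathcomp Require Import all_boot all_order all_algebra fraction.
From mathcomp Require Import Rstruct.
From Stdlib Require Import Reals.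

Set Implicit Arguments.
Unset Strict Implicit.
Unset Printing Implicit Defensive.

Import Order.TTheory GRing.Theory Num.Theory.
Local Open Scope ring_scope.

Notation Real := Rdefinitions.R.

(* An ordering of a field K, given by its positive cone P
   (the set of elements >= 0): P + P <= P, P P <= P, P u -P = K,
   P n -P = {0}. *)
Definition ordering (K : fieldType) (P : K -> Prop) : Prop :=
  [/\ (forall a b, P a -> P b -> P (a + b)),
      (forall a b, P a -> P b -> P (a * b)),
      (forall a, P a \/ P (- a)) &
      (forall a, P a -> P (- a) -> a = 0)].

(* An R-place of K : a map K -> R u {oo} (None encodes oo) such that
   the set O of elements with finite value is a ring, the map restricted
   to O is a ring homomorphism into R, and if xi x = oo then x <> 0 and
   xi (x^-1) = 0  (Lang's definition of a place). *)
Definition real_place (K : fieldType) (xi : K -> option Real) : Prop :=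
  [/\ xi 1 = Some 1,
      (forall a b x y, xi a = Some x -> xi b = Some y ->
          xi (a + b) = Some (x + y) /\ xi (a * b) = Some (x * y)),
      (forall a x, xi a = Some x -> xi (- a) = Some (- x)) &
      (forall a, xi a = None -> a != 0 /\ xi (a^-1) = Some 0)].

Definition M (K : fieldType) : (K -> option Real) -> Prop := @real_place K.

Definition compatible (K : fieldType) (P : K -> Prop) (xi : K -> option Real)
  : Prop :=
  forall a, P a -> xi a = None \/ exists x, xi a = Some x /\ 0 <= x.

(* lambda(P) = xi : xi is the (unique) R-place compatible with P. *)
Definition lambda_is (K : fieldType) (P : K -> Prop) (xi : K -> option Real)
  : Prop := M xi /\ compatible P xi.

Notation ratfun F := {fraction {poly F}}.

(* Main.v *)
Require Import Defs.
From mathcomp Require Import all_boot all_order all_algebra fraction.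
From mathcomp Require Import Rstruct.
From Stdlib Require Import Classical.
Import Order.TTheory GRing.Theory Num.Theory.
Local Open Scope ring_scope.
Set Implicit Arguments.
Unset Strict Implicit.
From mathcomp Require Import complex zify.
From mathcomp.algebra_tactics Require Import ring.
Section Ord.
Variable K : fieldType.
Implicit Types (P Q : K -> Prop) (x y : K).

Lemma ord0 P : ordering P -> P 0.
Proof. by case=> _ hm ht _; have [] := ht 0; rewrite ?oppr0. Qed.

Lemma ord_sq P x : ordering P -> P (x * x).
Proof.
case=> _ hm ht _; have [h|h] := ht x; first exact: hm.
by rewrite -mulrNN; apply: hm.
Qed.

Lemma ord_not_neg P x : ordering P -> x != 0 -> P x -> ~ P (- x).
Proof. by case=> _ _ _ ha xn0 px pnx; move/eqP: xn0; apply; apply: ha. Qed.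

Lemma ord_mulP P x y : ordering P -> x != 0 -> y != 0 ->
  (P (x * y) <-> (P x <-> P y)).
Proof.
move=> oP xn0 yn0; have xy0 : x * y != 0 by rewrite mulf_neq0.
have := oP; case=> _ hm ht _.
have nx := ord_not_neg oP xn0; have ny := ord_not_neg oP yn0.
have nxy := ord_not_neg oP xy0.
have nnx : P (- x) -> ~ P x by move=> h; have := ord_not_neg oP _ h; rewrite opprK oppr_eq0; apply.
have nny : P (- y) -> ~ P y by move=> h; have := ord_not_neg oP _ h; rewrite opprK oppr_eq0; apply.
have [px|px] := ht x; have [py|py] := ht y.
- by have := hm _ _ px py; tauto.
- have := hm _ _ px py; rewrite mulrN => h; have := nny py; have := nxy; tauto.
- have := hm _ _ px py; rewrite mulNr => h; have := nnx px; have := nxy; tauto.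
- have := hm _ _ px py; rewrite mulrNN => h; have := nnx px; have := nny py; tauto.
Qed.

Definition D P Q x := (P x <-> Q x).

Lemma D_mul P Q x y : ordering P -> ordering Q -> x != 0 -> y != 0 ->
  (D P Q (x * y) <-> (D P Q x <-> D P Q y)).
Proof.
move=> oP oQ xn0 yn0; rewrite /D.
have := ord_mulP oP xn0 yn0; have := ord_mulP oQ xn0 yn0.
case: (classic (P x)); case: (classic (P y)); case: (classic (Q x)); case: (classic (Q y)); tauto.
Qed.

Lemma D_sq P Q x : ordering P -> ordering Q -> D P Q (x * x).
Proof. by move=> oP oQ; split=> _; apply: ord_sq. Qed.

Lemma D_inv P Q x : ordering P -> ordering Q -> x != 0 -> (D P Q x^-1 <-> D P Q x).
Proof.
move=> oP oQ xn0; have xi0 : x^-1 != 0 by rewrite invr_eq0.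
have -> : x^-1 = x * (x^-1 * x^-1) by rewrite mulrA mulfV // mul1r.
rewrite D_mul ?mulf_neq0 //; have := @D_sq P Q x^-1 oP oQ; tauto.
Qed.

Variable zeta : K -> option Real.
Hypothesis hz : real_place zeta.

Lemma Z0 : zeta 0 = Some 0.
Proof.
case: hz => h1 hadd hopp _.
have := hopp _ _ h1 => hm1.
have [h _] := hadd _ _ _ _ h1 hm1; by rewrite !subrr in h.
Qed.

Lemma Zinv_unit x r : zeta x = Some r -> r != 0 -> zeta x^-1 = Some r^-1.
Proof.
move=> hx rn0; case: (hz) => h1 hadd _ hnone.
have xn0 : x != 0 by apply: contra_neq rn0 => x0; move: hx; rewrite x0 Z0 => -[].
case hi: (zeta x^-1) => [s|].
  have [_] := hadd _ _ _ _ hx hi; rewrite mulfV // h1 => -[hs].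
  by congr Some; apply: (mulfI rn0); rewrite mulfV // hs.
have [_] := hnone _ hi; rewrite invrK hx => -[r0]; by move/eqP: rn0.
Qed.

Lemma Zzero_inv x : zeta x = Some 0 -> x != 0 -> zeta x^-1 = None.
Proof.
move=> hx xn0; case: (hz) => h1 hadd _ _.
case hi: (zeta x^-1) => [s|] //.
have [_] := hadd _ _ _ _ hx hi; rewrite mulfV // h1 mul0r => -[].
by move/eqP; rewrite oner_eq0.
Qed.

Lemma Znone_inv x : zeta x = None -> zeta x^-1 = Some 0 /\ x != 0.
Proof. by case: hz => _ _ _ h /h [? ?]. Qed.

Lemma unit_sign P u r : ordering P -> compatible P zeta ->
  zeta u = Some r -> r != 0 -> (P u <-> 0 < r).
Proof.
move=> oP cP hu rn0; split.
  move/cP; rewrite hu => -[//|[x [[<-] xge]]].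
  by rewrite lt_neqAle eq_sym rn0.
move=> rgt; have := oP; case=> _ _ ht _; have [//|pn] := ht u.
have := cP _ pn; case: (hz) => _ _ hopp _; rewrite (hopp _ _ hu) => -[//|[x [[<-] xge]]].
by move: xge; rewrite oppr_ge0 leNgt rgt.
Qed.

Lemma D_unit P Q u r : ordering P -> ordering Q -> compatible P zeta -> compatible Q zeta ->
  zeta u = Some r -> r != 0 -> D P Q u.
Proof.
move=> oP oQ cP cQ hu rn0; rewrite /D (unit_sign oP cP hu rn0) (unit_sign oQ cQ hu rn0).
by [].
Qed.
End Ord.

Section FC.
Local Open Scope complex_scope.
Variable F : rcfType.
Local Notation C := (F[i]).
Local Notation rc := (real_complex F).

Lemma poly_le2E (r : {poly F}) : (size r <= 2)%N -> r = (r`_0)%:P + (r`_1)%:P * 'X.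
Proof.
move=> hs; apply/polyP => i; rewrite coefD coefC coefMX coefC.
case: i => [|[|i]] /=; first by rewrite addr0.
  by rewrite add0r.
by rewrite addr0 nth_default // (leq_trans hs).
Qed.

Lemma cmplx_eq (a b c d : F) : (a +i* b = c +i* d) -> a = c /\ b = d.
Proof. by case. Qed.

Lemma factor_rcf (p : {poly F}) : (1 < size p)%N ->
  (exists a, root p a) \/
  (exists u v q, v != 0 /\ p = q * (('X - u%:P)^+2 + (v^+2)%:P)).
Proof.
move=> hs.
have : size (map_poly rc p) != 1%N by rewrite size_map_poly; case: (size p) hs => [|[|]].
case/closed_rootP => -[u v] hz.
have [v0|vn0] := eqVneq v 0.
  left; exists u; move: hz; rewrite v0 complexr0 /root horner_map /=.
  by rewrite -[0 : C]/(rc 0) (inj_eq (@complexI F)).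
right; exists u, v, (p %/ (('X - u%:P)^+2 + (v^+2)%:P)); split => //.
set Qd := (('X - u%:P)^+2 + (v^+2)%:P).
have sQ : size Qd = 3%N.
  have h3 : size (('X - u%:P) ^+ 2) = 3%N by exact: size_exp_XsubC.
  rewrite /Qd size_polyDl h3 //.
  by apply: (leq_ltn_trans (size_polyC_leq1 _)).
have Qd0 : Qd != 0 by rewrite -size_poly_eq0 sQ.
have hQ : (map_poly rc Qd).[u +i* v] = 0.
  rewrite /Qd rmorphD rmorphXn rmorphB /= map_polyX map_polyC /=.
  rewrite !hornerE.
  rewrite map_polyC hornerC /=; simpc; by rewrite -expr2 addNr.
have hr : (map_poly rc (p %% Qd)).[u +i* v] = 0.
  move: hz; rewrite /root {1}(divp_eq p Qd) rmorphD rmorphM /= !hornerE hQ mulr0 add0r.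
  by move/eqP.
have sr : (size (p %% Qd)%R <= 2)%N.
  by have := ltn_modp p Qd; rewrite Qd0 sQ.
set r := modp p Qd in hr sr *.
rewrite {1}(divp_eq p Qd) -/r.
suff -> : r = 0 by rewrite addr0.
move: hr; rewrite [r in map_poly _ r](poly_le2E sr) rmorphD rmorphM /= map_polyX !map_polyC /= !hornerE.
simpc; case=> h0 h1.
have r10 : r`_1 = 0 by move/eqP: h1; rewrite mulf_eq0 (negbTE vn0) orbF => /eqP.
move: h0; rewrite r10 mul0r addr0 => r00.
by rewrite (poly_le2E sr) r10 r00 mul0r addr0.
Qed.
End FC.

Section RF.
Variable F : rcfType.
Local Notation K := (ratfun F).
Local Notation tf := (@FracField.tofrac {poly F}).
Local Notation cst a := (tf a%:P).
Local Notation y := (tf 'X).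
Implicit Types (P Q : K -> Prop).

Lemma cst_sq (a : F) : 0 <= a -> cst a = cst (Num.sqrt a) * cst (Num.sqrt a).
Proof. by move=> a0; rewrite -tofracM -polyCM -expr2 sqr_sqrtr. Qed.

Lemma ord_cst P a : ordering P -> a != 0 -> (P (cst a) <-> 0 < a).
Proof.
move=> oP an0; have can0 : cst a != 0 by rewrite tofrac_eq0 polyC_eq0.
split.
  move=> pa; rewrite lt_neqAle eq_sym an0 /=; rewrite leNgt; apply/negP => alt.
  have : P (- cst a) by rewrite -tofracN -polyCN cst_sq ?oppr_ge0 ?ltW //; apply: ord_sq.
  exact: ord_not_neg oP can0 pa.
by move=> agt; rewrite cst_sq ?ltW //; apply: ord_sq.
Qed.

Lemma D_cst P Q a : ordering P -> ordering Q -> a != 0 -> D P Q (cst a).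
Proof. by move=> oP oQ an0; rewrite /D (ord_cst oP an0) (ord_cst oQ an0). Qed.

Lemma P_quad P u v : ordering P -> P (tf (('X - u%:P)^+2 + (v^+2)%:P)).
Proof.
move=> oP; have := oP; case=> ha _ _ _.
rewrite tofracD tofracXn rmorphXn /= tofracXn !expr2; apply: ha; exact: ord_sq.
Qed.

Lemma D_poly P Q : ordering P -> ordering Q ->
  (forall a, D P Q (tf ('X - a%:P))) ->
  forall p, p != 0 -> D P Q (tf p).
Proof.
move=> oP oQ Hlin p; move: {2}(size p) (leqnn (size p)) => n; elim: n p => [|n IH] p hs p0.
  by move: p0; rewrite -size_poly_eq0; move: hs; case: (size p).
have [s1|s2] := leqP (size p) 1.
  rewrite [p]size1_polyC //; apply: D_cst => //; by rewrite -polyC_eq0 -size1_polyC.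
have [[a ra]|[u [v [q [vn0 pE]]]]] := factor_rcf s2.
  have /factor_theorem [q pE] := ra.
  have L0 : ('X - a%:P) != 0 by rewrite polyXsubC_eq0.
  have q0 : q != 0 by apply: contra_neq p0; rewrite pE => ->; rewrite mul0r.
  rewrite pE tofracM D_mul ?tofrac_eq0 //; split=> _; [exact: Hlin|].
  apply: (IH q _ q0); have := size_mul q0 L0; rewrite -pE size_XsubC => h.
  move: hs; rewrite h; case: (size q) => //= m; lia.
set Qd := ('X - u%:P)^+2 + (v^+2)%:P in pE.
have sQ : size Qd = 3%N.
  have h3 : size (('X - u%:P) ^+ 2) = 3%N by exact: size_exp_XsubC.
  rewrite /Qd size_polyDl h3 //.
  by apply: (leq_ltn_trans (size_polyC_leq1 _)).
have Q0 : Qd != 0 by rewrite -size_poly_eq0 sQ.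
have q0 : q != 0 by apply: contra_neq p0; rewrite pE => ->; rewrite mul0r.
rewrite pE tofracM D_mul ?tofrac_eq0 //; split=> _.
  by split=> _; apply: P_quad.
apply: (IH q _ q0); have := size_mul q0 Q0; rewrite -pE sQ => h.
move: hs; rewrite h; case: (size q) => //= m; lia.
Qed.

Lemma frac_repr (x : K) : exists n d, d != 0 /\ x = tf n / tf d.
Proof.
elim/quotW: x => r.
exists r.1, r.2; split; first exact: denom_ratioP.
apply: (@mulIf _ (tf r.2)); first by rewrite tofrac_eq0 denom_ratioP.
rewrite mulfVK ?tofrac_eq0 ?denom_ratioP //.
rewrite /FracField.tofrac; unlock.
rewrite -[_ * _]/(FracField.mul _ _).
rewrite -FracField.pi_mul.
apply/eqmodP => /=.
rewrite FracField.equivfE /FracField.mulf /= !numden_Ratio ?mulr1 ?oner_eq0 ?mulf_neq0 ?denom_ratioP //=.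
by rewrite mulrC.
Qed.

Lemma D_all P Q : ordering P -> ordering Q ->
  (forall a, D P Q (tf ('X - a%:P))) -> forall f, D P Q f.
Proof.
move=> oP oQ Hlin f; have [n [d [d0 ->]]] := frac_repr f.
have [->|n0] := eqVneq n 0.
  by rewrite tofrac0 mul0r; split=> _; apply: ord0.
rewrite D_mul ?invr_eq0 ?tofrac_eq0 // D_inv ?tofrac_eq0 //.
by split=> _; apply: D_poly.
Qed.
End RF.

Section Alg.
Variable K : fieldType.
Lemma alg1 (y c d : K) : y - c != 0 -> y - d = (y - c) * (1 + (c - d)/(y - c)).
Proof. by move=> h; field. Qed.
Lemma alg2 (y c d : K) : y - c != 0 -> (y - d)/(y - c) = 1 + (c - d)/(y - c).
Proof. by move=> h; field. Qed.
Lemma alg3 (y c d : K) : c - d != 0 -> y - c != 0 -> y - d = (c - d) * ((y - c)/(c - d) + 1).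
Proof. by move=> h1 h2; field. Qed.
Lemma alg4 (y d e : K) : y - d != 0 -> 1 - (y - e)/(y - d) = (e - d)/(y - d).
Proof. by move=> h; field. Qed.
Lemma alg5 (y d e : K) : e - d != 0 -> y - d != 0 -> y - d = (e - d) * ((y - d)/(e - d)).
Proof. by move=> h1 h2; field. Qed.
End Alg.

Section Main.
Variable F : rcfType.
Local Notation K := (ratfun F).
Local Notation tf := (@FracField.tofrac {poly F}).
Local Notation cst a := (tf a%:P).
Local Notation y := (tf 'X).
Variable zeta : K -> option Real.
Hypothesis hz : real_place zeta.

Lemma lin_ne0 (a : F) : y - cst a != 0.
Proof. by rewrite -tofracB tofrac_eq0 polyXsubC_eq0. Qed.

Lemma cstB (a b : F) : cst a - cst b = cst (a - b).
Proof. by rewrite -tofracB polyCB. Qed.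

Lemma key : exists t : K, t != 0 /\ forall P Q, ordering P -> ordering Q ->
  compatible P zeta -> compatible Q zeta -> D P Q t -> forall f, D P Q f.
Proof.
have [h1 hadd hopp hnone] := hz.
case: (classic (exists a0, forall a, zeta ((y - cst a0)/(y - cst a)) <> None)) => [[a0 Ha0]|HB].
  exists (y - cst a0); split; first exact: lin_ne0.
  move=> P Q oP oQ cP cQ Dt; apply: D_all => // a; rewrite tofracB.
  have E1 := alg1 (cst a) (lin_ne0 a0).
  have E2 := alg2 (cst a) (lin_ne0 a0).
  set w := (cst a0 - cst a)/(y - cst a0) in E1 E2 *.
  have n2 : (y - cst a)/(y - cst a0) != 0 by rewrite mulf_neq0 ?invr_eq0 ?lin_ne0.
  case hw: (zeta w) => [r|].
    have [h1w _] := hadd _ _ _ _ h1 hw.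
    have [r1|r1] := eqVneq (1 + r) 0.
      exfalso; apply: (Ha0 a); rewrite -invf_div.
      by apply: Zzero_inv => //; rewrite E2 h1w r1.
    rewrite E1 D_mul ?lin_ne0 -?E2 //.
    have := D_unit hz oP oQ cP cQ h1w r1; rewrite -E2; tauto.
  have [hwi wn0] := Znone_inv hz hw.
  have dn0 : cst a0 - cst a != 0 by apply: contra_neq wn0; rewrite /w => ->; rewrite mul0r.
  have wi : w^-1 = (y - cst a0)/(cst a0 - cst a) by rewrite /w invf_div.
  have E3 := alg3 dn0 (lin_ne0 a0); rewrite -wi in E3.
  have [h3 _] := hadd _ _ _ _ hwi h1; rewrite add0r in h3.
  have u0 : w^-1 + 1 != 0.
    by apply/eqP => e; move: h3; rewrite e (Z0 hz) => -[] /eqP; rewrite eq_sym oner_eq0.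
  rewrite E3 (D_mul oP oQ dn0 u0).
  have := D_unit hz oP oQ cP cQ h3 (oner_neq0 _).
  rewrite cstB in dn0 *; have := D_cst oP oQ (a:=a0 - a); rewrite -polyC_eq0 -tofrac_eq0.
  move=> /(_ dn0); tauto.
exists 1; split; first exact: oner_neq0.
move=> P Q oP oQ cP cQ _; apply: D_all => // a; rewrite tofracB.
have [a' ha'] : exists a', zeta ((y - cst a)/(y - cst a')) = None.
  apply: NNPP => hn; apply: HB; exists a => b hb; apply: hn; exists b.
  by case: (zeta _) hb.
have [hq _] := Znone_inv hz ha'; rewrite invf_div in hq.
have [hs _] := hadd _ _ _ _ h1 (hopp _ _ hq); rewrite oppr0 addr0 in hs.
set s := 1 - _ in hs.
have s0 : s != 0.
  by apply/eqP => e; move: hs; rewrite e (Z0 hz) => -[] /eqP; rewrite eq_sym oner_eq0.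
have Es := alg4 (cst a') (lin_ne0 a); rewrite -/s in Es.
have dn0 : cst a' - cst a != 0 by apply: contra_neq s0; rewrite Es => ->; rewrite mul0r.
have si : s^-1 = (y - cst a)/(cst a' - cst a) by rewrite Es invf_div.
have E : y - cst a = (cst a' - cst a) * s^-1 by rewrite si; exact: alg5 dn0 (lin_ne0 a).
have si0 : s^-1 != 0 by rewrite invr_eq0; exact: s0.
rewrite E (D_mul oP oQ dn0 si0) (D_inv oP oQ s0).
have := D_unit hz oP oQ cP cQ hs (oner_neq0 _).
rewrite cstB in dn0 *; have := D_cst oP oQ (a:=a' - a); rewrite -polyC_eq0 -tofrac_eq0.
move=> /(_ dn0); tauto.
Qed.
End Main.

From Stdlib Require Import FunctionalExtensionality PropExtensionality.

Theorem proposition2p5 (F : rcfType) (zeta : ratfun F -> option Real) :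
  M zeta ->
  forall P1 P2 P3 : ratfun F -> Prop,
    ordering P1 -> ordering P2 -> ordering P3 ->
    lambda_is P1 zeta -> lambda_is P2 zeta -> lambda_is P3 zeta ->
    P1 = P2 \/ P1 = P3 \/ P2 = P3.
Proof.
move=> hz P1 P2 P3 o1 o2 o3 [_ c1] [_ c2] [_ c3].
have [t [t0 Ht]] := key hz.
have eqP' : forall P Q, ordering P -> ordering Q -> compatible P zeta ->
    compatible Q zeta -> D P Q t -> P = Q.
  move=> P Q oP oQ cP cQ Dt; apply: functional_extensionality => f.
  apply: propositional_extensionality; exact: (Ht P Q).
case: (classic (D P1 P2 t)) => [d12|n12]; first by left; apply: eqP'.
case: (classic (D P1 P3 t)) => [d13|n13]; first by right; left; apply: eqP'.
right; right; apply: eqP' => //; move: n12 n13; rewrite /D.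
case: (classic (P1 t)); case: (classic (P2 t)); case: (classic (P3 t)); tauto.
Qed.
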